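(* For every fixed integer $k\ge1$, as formal power series in $y$, \[ \sum_{n\ge0}d^-_{n,k}y^n=\frac{y^{2k}(2-y)}{(1-y)^{k+1}}+y\,\delta_{k1}, \] where $\delta$ is the Kronecker delta.
   Context: For $n\ge1$ let $\Xi_n$ be the poset on $\{x_1,\dots,x_n\}$ whose cover relations are exactly: $x_2\prec x_1$, $x_3\prec x_2$, and for $3\le i\le n-1$, $x_i\prec x_{i+1}$ if $i$ is odd and $x_{i+1}\prec x_i$ if $i$ is even (so $x_1>x_2>x_3<x_4>x_5<\cdots$). A filter of a poset is an up-closed subset. $\Omega_n$ is the lattice of filters of $\Xi_n$ ordered by reverse inclusion; $\Omega_0$ is the one-element lattice. $d^-_{n,k}$ is the number of elements of $\Omega_n$ that are covered by exactly $k$ elements of $\Omega_n$ (equivalently, the number of $k$-element antichains of $\Xi_n$), and $d^-_{n,k}=0$ if there are none. *)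

(* Defs.v *)
From HB Require Import structures.
From mathcomp Require Import all_boot all_order all_algebra.
Set Implicit Arguments. Unset Strict Implicit. Unset Printing Implicit Defensive.
Import GRing.Theory.

(* Element i : 'I_n of Xi_n stands for x_(i+1).
   xi_cov a b (1-based labels) : x_a is covered by x_b (x_a ≺ x_b). *)
Definition xi_cov (a b : nat) : bool :=
  [|| (a == 2) && (b == 1),
      (a == 3) && (b == 2),
      [&& 3 <= a, odd a & b == a.+1]
    | [&& 4 <= b, ~~ odd b & a == b.+1] ].

Definition xi_le (n : nat) : rel 'I_n :=
  connect (fun x y : 'I_n => xi_cov x.+1 y.+1).

Definition is_filter (n : nat) (F : {set 'I_n}) : bool :=
  [forall x : 'I_n, forall y : 'I_n, (x \in F) && xi_le x y ==> (y \in F)].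

(* In Omega_n (filters ordered by reverse inclusion), G covers F:
   F < G (i.e. G is a proper subset of F) with no filter strictly between. *)
Definition omega_covers (n : nat) (F G : {set 'I_n}) : bool :=
  (G \proper F) &&
  ~~ [exists H : {set 'I_n}, [&& is_filter H, G \proper H & H \proper F]].

Definition dminus (n k : nat) : nat :=
  #|[set F : {set 'I_n} | is_filter F &&
       (#|[set G : {set 'I_n} | is_filter G && omega_covers F G]| == k)]|.

Definition dminus_trunc (k N : nat) : {poly int} :=
  \poly_(n < N.+1) (Posz (dminus n k)).

(* Main.v *)
Require Import Defs.
From mathcomp Require Import all_boot all_order all_algebra zify.
Set Implicit Arguments. Unset Strict Implicit. Unset Printing Implicit Defensive.
Definition cov0 (x y : nat) := xi_cov x.+1 y.+1.
Lemma cov0P x y : reflect [\/ x = 1 /\ y = 0, x = 2 /\ y = 1, [/\ 2<=x, ~~odd x & y = x.+1] | [/\ 3<=y, odd y & x = y.+1]] (cov0 x y).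
Proof.
rewrite /cov0 /xi_cov /= !ltnS negbK !eqSS.
apply: (iffP idP).
  case/or4P=> [/andP[/eqP-> /eqP->]|/andP[/eqP-> /eqP->]|/and3P[? ? /eqP->]|/and3P[? ? /eqP->]];
  [apply: Or41|apply: Or42|apply: Or43|apply: Or44]; done.
case=> [[->->]|[->->]|[->->->]|[->->->]] //=; by rewrite !eqxx ?orbT.
Qed.

Lemma cov_trans x y z : cov0 x y -> cov0 y z -> x = 2 /\ z = 0.
Proof.
move=> /cov0P[[->->]|[->->]|[H1 H2 ->]|[H1 H2 ->]] /cov0P[[]|[]|[]|[]] //=; try lia.
all: try (move=> *; subst; simpl in *; rewrite ?negbK in H2 *; done).
Qed.

Definition le0 x y := [|| x == y, cov0 x y | (x == 2) && (y == 0)].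
Definition rk (x : nat) : nat := if x == 0 then 2 else if x == 1 then 1 else if x == 2 then 0 else odd x.

Lemma cov_rk x y : cov0 x y -> rk x < rk y.
Proof.
move=> /cov0P[[->->]|[->->]|[H1 H2 ->]|[H1 H2 ->]] //.
  rewrite /rk /=; case: x H1 H2 => [|[|[|x]]] //= _; rewrite negbK => ->; done.
rewrite /rk /=; case: y H1 H2 => [|[|[|y]]] //= _ ->; done.
Qed.

Lemma le0_cov x y z : le0 x y -> cov0 y z -> le0 x z.
Proof.
case/or3P=> [/eqP->|H|/andP[/eqP-> /eqP->]] H2; rewrite /le0.
- by rewrite H2 orbT.
- by have [-> ->] := cov_trans H H2; rewrite orbT.
- by case/cov0P: H2 => [[]|[]|[]|[]].
Qed.

Lemma le0_rk x y : le0 x y -> x != y -> rk x < rk y.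
Proof.
case/or3P=> [->//|H _|/andP[/eqP-> /eqP->]//]; exact: cov_rk.
Qed.

Lemma path_le0 n x0 (p : seq 'I_n) (z : 'I_n) :
  path (fun a b : 'I_n => xi_cov a.+1 b.+1) z p -> le0 x0 z -> le0 x0 (last z p).
Proof.
elim: p z => [|a p IH] z //= /andP[Ha Hp] Hz.
exact: (IH a Hp (le0_cov Hz Ha)).
Qed.

Lemma xi_leE n (x y : 'I_n) : xi_le x y = le0 x y.
Proof.
apply/idP/idP.
  case/connectP=> p Hp ->.
  by apply: path_le0 Hp _; rewrite /le0 eqxx.
case/or3P=> [/eqP/val_inj->|H|/andP[/eqP Hx /eqP Hy]]; first exact: connect0.
  exact: connect1.
have h1 : 1 < n by rewrite -Hx (leq_trans _ (ltn_ord x)).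
apply: (@connect_trans _ _ (Ordinal h1)); apply: connect1.
  by change (cov0 x 1); apply/cov0P; apply: Or42.
by change (cov0 1 y); apply/cov0P; apply: Or41.
Qed.

Lemma xi_le_rk n (x y : 'I_n) : xi_le x y -> x != y -> rk x < rk y.
Proof. by rewrite xi_leE => H Hne; apply: le0_rk. Qed.

Lemma xi_le_anti n (x y : 'I_n) : xi_le x y -> xi_le y x -> x = y.
Proof.
move=> H1 H2; apply/eqP; apply/negPn/negP=> Hne.
have := xi_le_rk H1 Hne; have := xi_le_rk H2; rewrite eq_sym => /(_ Hne). lia.
Qed.

Definition minF n (F : {set 'I_n}) :=
  [set x in F | [forall y in F, xi_le y x ==> (y == x)]].

Lemma filterP n (F : {set 'I_n}) :
  reflect (forall x y, x \in F -> xi_le x y -> y \in F) (is_filter F).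
Proof.
apply: (iffP forallP) => [H x y Hx Hxy|H x].
  by move: (forallP (H x) y); rewrite Hx Hxy.
by apply/forallP=> y; apply/implyP=> /andP[]; apply: H.
Qed.

Lemma minFP n (F : {set 'I_n}) x :
  reflect (x \in F /\ forall y, y \in F -> xi_le y x -> y = x) (x \in minF F).
Proof.
rewrite inE; apply: (iffP andP) => [[Hx /forall_inP H]|[Hx H]].
  by split=> // y Hy Hyx; apply/eqP; exact: (implyP (H y Hy)).
by split=> //; apply/forall_inP=> y Hy; apply/implyP=> Hyx; rewrite (H y Hy Hyx).
Qed.

Lemma covers_set n (F : {set 'I_n}) : is_filter F ->
  [set G | is_filter G && omega_covers F G] = [set F :\ x | x in minF F].
Proof.
move=> /filterP HF; apply/setP=> G; rewrite inE; apply/idP/imsetP.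
  case/and3P=> /filterP HG HGF /existsPn Hno.
  have [HGsub [x0 Hx0F Hx0G]] := properP HGF.
  have Hx0 : x0 \in F :\: G by rewrite inE Hx0G.
  case: (@arg_maxnP _ x0 (mem (F :\: G)) rk Hx0) => x Hx Hmax.
  move: Hx; rewrite !inE => /andP[HxG HxF].
  have HH : forall z w, z \in x |: G -> xi_le z w -> w \in x |: G.
    move=> z w; rewrite !inE => /orP[/eqP->|Hz] Hzw; last by rewrite (HG z w Hz Hzw) orbT.
    case: (eqVneq w x) => [->|Hne]; first by [].
    case HwG: (w \in G); first by [].
    have := xi_le_rk Hzw; rewrite eq_sym => /(_ Hne) Hlt.
    have : w \in F :\: G by rewrite inE HwG (HF x w HxF Hzw).
    move/Hmax => /= Hle; lia.
  have HxGF : x |: G \subset F by rewrite subUset sub1set HxF HGsub.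
  have HGxG : G \proper x |: G by apply/properP; split; [exact: subsetUr|exists x; rewrite ?inE ?eqxx ?HxG].
  have EF : x |: G = F.
    case: (eqVproper HxGF) => // Hp; case/negP: (Hno (x |: G)).
    by rewrite HGxG Hp !andbT; apply/filterP.
  have EG : G = F :\ x.
    rewrite -EF; apply/setP=> z; rewrite !inE; case: (eqVneq z x) => [->|] //=.
    by rewrite (negbTE HxG).
  exists x => //; apply/minFP; split=> // y Hy Hyx; apply/eqP/negPn/negP=> Hne.
  have : y \in G by rewrite EG !inE Hne.
  by move=> HyG; case/negP: HxG; apply: HG Hyx.
case=> x /minFP[HxF Hmin] ->.
apply/and3P; split.
- apply/filterP=> z w; rewrite !inE => /andP[Hzx HzF] Hzw.
  rewrite (HF z w HzF Hzw) andbT; apply/negP=> /eqP Hw; subst w.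
  by rewrite (Hmin z HzF Hzw) eqxx in Hzx.
- exact: properD1.
apply/existsPn=> H; apply/negP=> /and3P[_ H1 H2].
have := proper_card H1; have := proper_card H2; rewrite (cardsD1 x F) HxF.
lia.
Qed.

Lemma covers_card n (F : {set 'I_n}) : is_filter F ->
  #|[set G | is_filter G && omega_covers F G]| = #|minF F|.
Proof.
move=> HF; rewrite covers_set // card_in_imset //.
move=> x y /minFP[Hx _] /minFP[Hy _] E.
apply/eqP/negPn/negP=> Hne.
have : x \in F :\ y by rewrite !inE Hne.
by rewrite -E !inE eqxx.
Qed.

Lemma xi_le_refl n (x : 'I_n) : xi_le x x.
Proof. exact: connect0. Qed.
Lemma xi_le_trans n (x y z : 'I_n) : xi_le x y -> xi_le y z -> xi_le x z.
Proof. exact: connect_trans. Qed.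

Definition antichain n (A : {set 'I_n}) :=
  [forall x in A, forall y in A, xi_le x y ==> (x == y)].
Definition up n (A : {set 'I_n}) := [set y | [exists x in A, xi_le x y]].

Lemma antichainP n (A : {set 'I_n}) :
  reflect (forall x y, x \in A -> y \in A -> xi_le x y -> x = y) (antichain A).
Proof.
apply: (iffP forall_inP) => [H x y Hx Hy Hxy|H x Hx].
  by have /forall_inP/(_ y Hy)/implyP/(_ Hxy)/eqP := H x Hx.
by apply/forall_inP=> y Hy; apply/implyP=> Hxy; rewrite (H x y Hx Hy Hxy).
Qed.

Lemma upP n (A : {set 'I_n}) y : reflect (exists2 x, x \in A & xi_le x y) (y \in up A).
Proof. by rewrite inE; apply: (iffP exists_inP). Qed.

Lemma up_minF n (F : {set 'I_n}) : is_filter F -> up (minF F) = F.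
Proof.
move=> /filterP HF; apply/setP=> y; apply/upP/idP.
  by case=> x /minFP[Hx _] Hxy; apply: HF Hxy.
move=> Hy.
have Py : (fun x => (x \in F) && xi_le x y) y by rewrite Hy xi_le_refl.
case: (@arg_minnP _ y (fun x => (x \in F) && xi_le x y) rk Py) => x /andP[HxF Hxy] Hmin.
exists x => //; apply/minFP; split=> // z HzF Hzx.
apply/eqP/negPn/negP=> Hne.
have Hlt := xi_le_rk Hzx Hne.
have : (z \in F) && xi_le z y by rewrite HzF (xi_le_trans Hzx Hxy).
move/Hmin => /= Hle; lia.
Qed.

Lemma minF_anti n (F : {set 'I_n}) : antichain (minF F).
Proof.
apply/antichainP=> x y /minFP[Hx _] /minFP[_ Hy] Hxy; exact: Hy.
Qed.

Lemma up_filter n (A : {set 'I_n}) : is_filter (up A).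
Proof.
apply/filterP=> x y /upP[a Ha Hax] Hxy; apply/upP; exists a => //.
exact: xi_le_trans Hax Hxy.
Qed.

Lemma minF_up n (A : {set 'I_n}) : antichain A -> minF (up A) = A.
Proof.
move=> /antichainP HA; apply/setP=> x; apply/minFP/idP.
  case=> /upP[a Ha Hax] Hmin.
  have Hau : a \in up A by apply/upP; exists a => //; exact: xi_le_refl.
  by rewrite -(Hmin a Hau Hax).
move=> Hx; split; first by apply/upP; exists x => //; exact: xi_le_refl.
move=> y /upP[a Ha Hay] Hyx.
have Eax := HA a x Ha Hx (xi_le_trans Hay Hyx); subst a.
exact: xi_le_anti.
Qed.

Lemma dminus_anti n k :
  dminus n k = #|[set A : {set 'I_n} | antichain A && (#|A| == k)]|.
Proof.
rewrite /dminus.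
have -> : [set F : {set 'I_n} | is_filter F &&
       (#|[set G : {set 'I_n} | is_filter G && omega_covers F G]| == k)] =
    [set F : {set 'I_n} | is_filter F && (#|minF F| == k)].
  by apply/setP=> F; rewrite !inE; case HF: (is_filter F) => //=; rewrite covers_card.
rewrite -(@card_in_imset _ _ (@minF n)).
  apply: eq_card => A; rewrite [in RHS]inE; apply/imsetP/idP.
    by case=> F; rewrite inE => /andP[_ Hk] ->; rewrite minF_anti.
  case/andP=> HA Hk; exists (up A); last by rewrite minF_up.
  by rewrite inE up_filter minF_up.
move=> F1 F2; rewrite !inE => /andP[H1 _] /andP[H2 _] E.
by rewrite -(up_minF H1) E up_minF.
Qed.

Lemma card_count (T : finType) (P : pred T) : #|P| = count P (enum T).
Proof. by rewrite enumT cardE /enum_mem size_filter. Qed.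

Definition cmp (i j : nat) := (i != j) && [|| (i <= 2) && (j <= 2), j == i.+1 | i == j.+1].

Lemma cmpC i j : cmp i j = cmp j i.
Proof. by rewrite /cmp eq_sym [(j <= 2) && _]andbC [(i == j.+1) || _]orbC. Qed.

Lemma cmp_le0 x y : x != y -> (le0 x y || le0 y x) = cmp x y.
Proof.
move=> Hne; have Hne' : (y == x) = false by rewrite eq_sym (negbTE Hne).
rewrite /le0 /cmp Hne (negbTE Hne) Hne' /=.
apply/idP/idP.
  case/orP=> [/orP[/cov0P|/andP[/eqP-> /eqP->]//]|/orP[/cov0P|/andP[/eqP-> /eqP->]//]].
    case=> [[->->]|[->->]|[_ _ ->]|[_ _ ->]] //=; by rewrite eqxx ?orbT.
  case=> [[->->]|[->->]|[_ _ ->]|[_ _ ->]] //=; by rewrite eqxx ?orbT.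
case/or3P=> [/andP[Hx Hy]|/eqP Hy|/eqP Hx].
- move: Hne Hx Hy; clear Hne'; case: x => [|[|[|x]]] //; case: y => [|[|[|y]]] //= _ _ _;
   rewrite /cov0 /xi_cov //=.
- subst y; clear Hne'; case: x Hne => [|[|x]] _; try by rewrite /cov0 /xi_cov /=.
  case Ho: (odd x).
    apply/or3P; apply: Or32; apply/cov0P; apply: Or44; split=> //=; rewrite ?negbK ?Ho //; by case: x Ho.
  apply/or3P; apply: Or31; apply/orP; left; apply/cov0P; apply: Or43; split=> //=; by rewrite ?negbK Ho.
- subst x; clear Hne'; case: y Hne => [|[|y]] _; try by rewrite /cov0 /xi_cov /=.
  case Ho: (odd y).
    apply/or3P; apply: Or31; apply/orP; left; apply/cov0P; apply: Or44; split=> //=; rewrite ?negbK ?Ho //; by case: y Ho.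
  apply/or3P; apply: Or32; apply/cov0P; apply: Or43; split=> //=; by rewrite ?negbK Ho.
Qed.

Lemma antichain_cmp n (A : {set 'I_n}) :
  antichain A = [forall x in A, forall y in A, ~~ cmp x y].
Proof.
apply/antichainP/forall_inP => [H x Hx|H x y Hx Hy Hxy].
  apply/forall_inP=> y Hy; apply/negP=> Hc.
  have Hne : (x : nat) != y by case/andP: Hc.
  move: Hc; rewrite -cmp_le0 // -!xi_leE => /orP[Hxy|Hyx].
    by move: (H x y Hx Hy Hxy) Hne => ->; rewrite eqxx.
  by move: (H y x Hy Hx Hyx) Hne => ->; rewrite eqxx.
apply/eqP/negPn/negP=> Hne.
have Hne' : (x : nat) != y by [].
have := forall_inP (H x Hx) y Hy; rewrite -cmp_le0 // -!xi_leE Hxy.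
done.
Qed.

Definition bits n (A : {set 'I_n}) := [seq x \in A | x <- enum 'I_n].

Lemma size_bits n (A : {set 'I_n}) : size (bits A) = n.
Proof. by rewrite size_map size_enum_ord. Qed.

Lemma nth_bits n (A : {set 'I_n}) (x : 'I_n) : nth false (bits A) x = (x \in A).
Proof. by rewrite (nth_map x) ?nth_ord_enum // size_enum_ord. Qed.

Lemma count_bits n (A : {set 'I_n}) : count id (bits A) = #|A|.
Proof. by rewrite count_map card_count. Qed.

Definition indepF (l : seq bool) :=
  all (fun i => nth false l i ==> ~~ has (fun j => nth false l j && cmp i j) (iota 0 i))
      (iota 0 (size l)).

Lemma indepFP l : reflect (forall i j, i < size l -> j < i -> nth false l i -> nth false l j -> ~~ cmp i j)
  (indepF l).
Proof.
apply: (iffP allP) => [H i j Hi Hj Li Lj|H i].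
  have := H i; rewrite mem_iota add0n Hi Li => /(_ isT) /hasPn /(_ j).
  by rewrite mem_iota add0n Hj Lj => /(_ isT).
rewrite mem_iota add0n => Hi; apply/implyP=> Li; apply/hasPn=> j.
rewrite mem_iota add0n => Hj; apply/negP=> /andP[Lj Hc].
by move: (H i j Hi Hj Li Lj); rewrite Hc.
Qed.

Lemma indep_bits n (A : {set 'I_n}) : indepF (bits A) = antichain A.
Proof.
rewrite antichain_cmp; apply/indepFP/forall_inP => [H x Hx|H i j Hi Hj Li Lj].
  apply/forall_inP=> y Hy.
  case: (ltngtP x y) => [Hlt|Hlt|Heq].
  - rewrite cmpC; apply: H; rewrite ?size_bits ?nth_bits //.
  - apply: H; rewrite ?size_bits ?nth_bits //.
  - by rewrite /cmp Heq eqxx.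
rewrite size_bits in Hi.
have Hj' : j < n by apply: ltn_trans Hi.
have := forall_inP (H (Ordinal Hi) _) (Ordinal Hj').
rewrite -!nth_bits /=; apply; done.
Qed.

Fixpoint allseq (n : nat) : seq (seq bool) :=
  if n is m.+1 then [seq rcons l true | l <- allseq m] ++ [seq rcons l false | l <- allseq m]
  else [:: [::]].

Lemma mem_allseq n l : (l \in allseq n) = (size l == n).
Proof.
elim: n l => [|n IH] l; first by case: l.
case/lastP: l => [|l b] /=.
  by rewrite mem_cat; apply/negP=> /orP[] /mapP[l' _] /(congr1 size); rewrite size_rcons.
rewrite size_rcons eqSS -IH mem_cat; case: b.
  rewrite (mem_map (@rcons_injl _ true)); case: (l \in allseq n) => //=.
  by apply/negP=> /mapP[l' _] /(congr1 (last false)); rewrite !last_rcons.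
rewrite (mem_map (@rcons_injl _ false)) orbC; case: (l \in allseq n) => //=.
by apply/negP=> /mapP[l' _] /(congr1 (last false)); rewrite !last_rcons.
Qed.

Lemma uniq_allseq n : uniq (allseq n).
Proof.
elim: n => [|n IH] //=.
rewrite cat_uniq !(map_inj_uniq (@rcons_injl _ _)) IH /= andbT.
apply/hasPn=> l /mapP[l' _ ->]; apply/negP=> /mapP[l'' _] /(congr1 (last false)).
by rewrite !last_rcons.
Qed.

Lemma card_bits n (P : pred (seq bool)) :
  #|[set A : {set 'I_n} | P (bits A)]| = count P (allseq n).
Proof.
rewrite cardsE card_count -(count_map (@bits n) P).
suff /permP -> : perm_eq [seq bits i | i <- enum {set 'I_n}] (allseq n) by [].
apply: uniq_perm; last first.
- move=> l; rewrite mem_allseq; apply/mapP/eqP=> [[A _ ->]|Hl]; first exact: size_bits.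
  exists [set x : 'I_n | nth false l x]; first by rewrite mem_enum.
  apply: (@eq_from_nth _ false); rewrite ?size_bits // => i; rewrite Hl => Hi.
  by rewrite -[i]/(nat_of_ord (Ordinal Hi)) nth_bits inE.
- exact: uniq_allseq.
rewrite map_inj_uniq ?enum_uniq // => A B E; apply/setP=> x.
by rewrite -!nth_bits E.
Qed.

Definition fc (n k : nat) := count (fun l => indepF l && (count id l == k)) (allseq n).

Lemma dminus_fc n k : dminus n k = fc n k.
Proof.
rewrite dminus_anti /fc -card_bits; apply: eq_card => A; rewrite !inE.
by rewrite indep_bits count_bits.
Qed.

Lemma indepF_rcons l b : indepF (rcons l b) =
  indepF l && (b ==> ~~ has (fun j => nth false l j && cmp (size l) j) (iota 0 (size l))).
Proof.
rewrite /indepF size_rcons -addn1 iotaD all_cat /= add0n andbT.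
rewrite nth_rcons ltnn eqxx.
congr (_ && _).
  apply: eq_in_all => i; rewrite mem_iota add0n => /andP[_ Hi].
  rewrite nth_rcons Hi; congr (_ ==> ~~ _).
  apply: eq_in_has => j; rewrite mem_iota add0n => /andP[_ Hj].
  by rewrite nth_rcons (ltn_trans Hj Hi).
congr (_ ==> ~~ _); apply: eq_in_has => j; rewrite mem_iota add0n => /andP[_ Hj].
by rewrite nth_rcons Hj.
Qed.

Lemma count_rcons1 l b : count id (rcons l b) = count id l + b.
Proof. by rewrite -cats1 count_cat /= addn0. Qed.

Lemma has_rcons l b : 2 <= size l ->
  has (fun j => nth false (rcons l b) j && cmp (size (rcons l b)) j) (iota 0 (size (rcons l b))) = b.
Proof.
move=> Hs; rewrite size_rcons -addn1 iotaD has_cat /= add0n orbF.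
rewrite nth_rcons ltnn eqxx.
have -> : cmp (size l + 1) (size l) by rewrite /cmp; apply/andP; split; [apply/eqP; lia|apply/or3P; apply: Or33; apply/eqP; lia].
rewrite andbT; suff -> : has (fun j => nth false (rcons l b) j && cmp (size l + 1) j) (iota 0 (size l)) = false by [].
apply/negbTE/hasPn => j; rewrite mem_iota add0n => /andP[_ Hj].
rewrite /cmp negb_and; apply/orP; right.
apply/negP => /andP[_ /or3P[/andP[H1 _]|/eqP H1|/eqP H1]]; lia.
Qed.

Lemma count_false (T : Type) (s : seq T) : count (fun _ => false) s = 0.
Proof. by elim: s. Qed.

Lemma fc_rec n k : 2 <= n -> fc n.+2 k.+1 = fc n.+1 k.+1 + fc n k.
Proof.
move=> Hn; rewrite /fc [allseq n.+2]/= count_cat !count_map addnC.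
congr (_ + _).
  apply: eq_count => l /=; by rewrite indepF_rcons count_rcons1 addn0 andbT.
rewrite count_cat !count_map.
rewrite (@eq_in_count _ _ (fun _ => false)); last first.
  move=> l; rewrite mem_allseq => /eqP Hl /=.
  by rewrite indepF_rcons has_rcons ?Hl //= andbF.
rewrite count_false add0n.
apply: eq_in_count => l; rewrite mem_allseq => /eqP Hl /=.
rewrite !indepF_rcons has_rcons ?Hl //= !count_rcons1 addn0 addn1 eqSS.
by rewrite !andbT.
Qed.

Lemma fc_0 n : fc n 0 = 1.
Proof.
elim: n => [|n IH]; first by [].
rewrite /fc /= count_cat !count_map.
rewrite (@eq_count _ _ (fun _ => false)); last first.
  by move=> l /=; rewrite count_rcons1 addn1 andbF.
rewrite count_false add0n -IH /fc; apply: eq_count => l /=.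
by rewrite indepF_rcons count_rcons1 addn0 andbT.
Qed.

Lemma fc_small k : [/\ fc 0 k = (k == 0), fc 1 k = (k <= 1), fc 2 k = (k == 0) + 2 * (k == 1)
  & fc 3 k = (k == 0) + 3 * (k == 1)].
Proof. by case: k => [|[|[|k]]]; vm_compute. Qed.

From mathcomp Require Import ring.
Import GRing.Theory.
Local Open Scope ring_scope.

Definition agr (N : nat) (p q : {poly int}) := forall i, (i <= N)%N -> p`_i = q`_i.

Lemma agr_mulr N p q r : agr N p q -> agr N (p * r) (q * r).
Proof.
move=> H i Hi; rewrite !coefM; apply: eq_bigr => j _; rewrite H //.
by rewrite (leq_trans _ Hi) // -ltnS.
Qed.

Lemma agr_mull N p q r : agr N p q -> agr N (r * p) (r * q).
Proof. by move=> H; rewrite ![r * _]mulrC; apply: agr_mulr. Qed.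

Lemma agr_addl N p q r : agr N p q -> agr N (r + p) (r + q).
Proof. by move=> H i Hi; rewrite !coefD H. Qed.

Lemma agr_trans N p q r : agr N p q -> agr N q r -> agr N p r.
Proof. by move=> H1 H2 i Hi; rewrite H1 // H2. Qed.

Lemma agr_eq N p q : p = q -> agr N p q.
Proof. by move=> ->. Qed.

Lemma coef_T k N i : (i <= N)%N -> (dminus_trunc k N)`_i = Posz (fc i k).
Proof. by move=> Hi; rewrite coef_poly ltnS Hi dminus_fc. Qed.

Lemma T0 N : agr N (dminus_trunc 0 N * (1 - 'X)) 1.
Proof.
move=> i Hi; rewrite mulrBr mulr1 coefB coefMX coef_T // coef1.
case: i Hi => [|i] Hi /=; first by rewrite fc_0.
by rewrite coef_T ?fc_0 ?subrr // ltnW.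
Qed.

Definition Cp (k : nat) : {poly int} :=
  if k == 1%N then 'X else if k == 2%N then - 'X^3 else 0.

Lemma fcs0 k : fc 0 k = (k == 0)%N. Proof. by case: (fc_small k). Qed.
Lemma fcs1 k : fc 1 k = (k <= 1)%N. Proof. by case: (fc_small k). Qed.
Lemma fcs2 k : fc 2 k = ((k == 0)%N + 2 * (k == 1)%N)%N. Proof. by case: (fc_small k). Qed.
Lemma fcs3 k : fc 3 k = ((k == 0)%N + 3 * (k == 1)%N)%N. Proof. by case: (fc_small k). Qed.

Lemma Trec k N : agr N (dminus_trunc k.+1 N * (1 - 'X)) (Cp k.+1 + 'X^2 * dminus_trunc k N).
Proof.
move=> i Hi; rewrite mulrBr mulr1 coefB coefMX coefD [_ * dminus_trunc _ _]mulrC coefMXn.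
case: i Hi => [|[|[|[|i]]]] Hi /=.
1-4: by case: k => [|[|k]]; rewrite /Cp /= ?coefX ?coefN ?coefXn ?coef0 ?coef_T ?fcs0 ?fcs1 ?fcs2 ?fcs3 /=; try lia.
rewrite coef_T ?(ltnW Hi) // coef_T ?(leq_trans _ Hi) // fc_rec //.
have -> : (Cp k.+1)`_i.+4 = 0.
  by case: k => [|[|k]]; rewrite /Cp /= ?coefX ?coefN ?coefXn ?coef0.
rewrite (_ : (i.+4 - 2 = i.+2)%N) // PoszD coef_T; [lia|]. lia.
Qed.

Definition Rp (k : nat) : {poly int} :=
  'X ^+ (2 * k) * (2%:R - 'X) + (k == 1%N)%:R *: ('X * (1 - 'X) ^+ k.+1).

Lemma main_agr k N : (1 <= k)%N -> agr N (dminus_trunc k N * (1 - 'X) ^+ k.+1) (Rp k).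
Proof.
elim: k => [//|k IH] _.
rewrite exprS mulrA.
refine (agr_trans (agr_mulr _ (@Trec k N)) _).
rewrite mulrDl.
case: k IH => [|k] IH.
  rewrite -mulrA expr1.
  refine (agr_trans (agr_addl _ (agr_mull _ (@T0 N))) _).
  by apply: agr_eq; rewrite /Rp /Cp /= scale1r; ring.
rewrite -mulrA.
refine (agr_trans (agr_addl _ (agr_mull _ (IH isT))) _).
apply: agr_eq; rewrite /Rp /Cp.
case: k {IH} => [|k] /=.
  rewrite scale0r addr0 scale1r; ring.
rewrite !scale0r !addr0 mul0r add0r mulrA -exprD.
by rewrite !mulnS !addSn !add0n.
Qed.

Theorem mainTheorem20 (k : nat) (hk : (1 <= k)%N) :
  forall N : nat,
    (dminus_trunc k N * (1 - 'X) ^+ k.+1)`_N =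
    ('X ^+ (2 * k) * (2%:R - 'X) + (k == 1%N)%:R *: ('X * (1 - 'X) ^+ k.+1))`_N.
Proof. move=> N; exact: (@main_agr k N hk N (leqnn N)). Qed.
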